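(* Let $q$ be a prime power and $T\in\mathbb F_q[X,Y,Z]$ a reduced polynomial satisfying Property (e): for all $a,b,c,d\in\mathbb F_q$ with $a\neq c$ there is a unique pair $(y,z)\in\mathbb F_q^2$ with $T(a,y,z)=b$ and $T(c,y,z)=d$. Let $\{1,\beta\}$ be a basis of $\mathbb F_{q^2}$ over $\mathbb F_q$, and for $a,b\in\mathbb F_q$ let $S_{a,b}\in\mathbb F_{q^2}[X]$ be the polynomial of least degree inducing the map $\mathbb F_{q^2}\to\mathbb F_{q^2}$, $y+\beta z\mapsto T(a,y,z)+\beta T(b,y,z)$ ($y,z\in\mathbb F_q$). Then $S_{a,b}$ is a permutation polynomial over $\mathbb F_{q^2}$ whenever $a\neq b$.
   Context: A polynomial is reduced if its degree in each variable is less than $q$. A permutation polynomial over $\mathbb F_{q^2}$ is one inducing a bijection of $\mathbb F_{q^2}$. *)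

(* Defs.v *)
From HB Require Import structures.
From mathcomp Require Import all_boot all_algebra all_field.
From mathcomp Require Import mpoly.
Set Implicit Arguments. Unset Strict Implicit. Unset Printing Implicit Defensive.
Import GRing.Theory.
Local Open Scope ring_scope.

Definition ev3 (F : ringType) (T : {mpoly F[3]}) (a y z : F) : F :=
  T.@[fun i : 'I_3 => match val i with 0 => a | 1 => y | _ => z end].

Definition reduced_mpoly (F : ringType) (q : nat) (T : {mpoly F[3]}) : Prop :=
  forall m, m \in msupp T -> forall i : 'I_3, (m i < q)%N.

Definition property_e (F : ringType) (T : {mpoly F[3]}) : Prop :=
  forall a b c d : F, a != c ->
    exists! yz : F * F, ev3 T a yz.1 yz.2 = b /\ ev3 T c yz.1 yz.2 = d.

Definition induces_Sab (F : fieldType) (L : fieldExtType F) (beta : L)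
    (T : {mpoly F[3]}) (a b : F) (S : {poly L}) : Prop :=
  forall y z : F, S.[y%:A + z *: beta] = (ev3 T a y z)%:A + (ev3 T b y z)%:A * beta.

Definition is_Sab (F : fieldType) (L : fieldExtType F) (beta : L)
    (T : {mpoly F[3]}) (a b : F) (S : {poly L}) : Prop :=
  induces_Sab beta T a b S /\
  forall S' : {poly L}, induces_Sab beta T a b S' -> (size S <= size S')%N.

Definition perm_poly (L : fieldType) (S : {poly L}) : Prop :=
  bijective (fun x : L => S.[x]).

(* Main.v *)
Require Import Defs.
From HB Require Import structures.
From mathcomp Require Import all_boot all_algebra all_field.
From mathcomp Require Import mpoly.
Import GRing.Theory.
Local Open Scope ring_scope.

Section Aux.
Variables (F : fieldType) (L : fieldExtType F) (beta : L).
Hypothesis hB : basis_of fullv [:: 1; beta].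
Let X : 2.-tuple L := [tuple of [:: (1 : L); beta]].

Lemma decomp (x : L) : exists y z : F, x = y%:A + z *: beta.
Proof.
have hs : x \in <<X>>%VS.
  by rewrite (span_basis hB) memvf.
rewrite (coord_span hs) big_ord_recl big_ord1.
by exists (coord X ord0 x); exists (coord X (lift ord0 ord0) x).
Qed.

Lemma uniq_coords (y z y' z' : F) :
  y%:A + z *: beta = y'%:A + z' *: beta -> y = y' /\ z = z'.
Proof.
move=> E.
have hf : free X by exact: (basis_free hB).
pose k := fun i : 'I_2 => if i == ord0 then y - y' else z - z'.
have H := (freeP hf) k.
have S0 : \sum_(i < 2) k i *: X`_i = 0.
  rewrite big_ord_recl big_ord1 /k /= !scalerBl.
  by rewrite addrACA E addrACA !subrr addr0.
have := H S0 ord0; have := H S0 (lift ord0 ord0); rewrite /k /=.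
by move=> /eqP; rewrite subr_eq0 => /eqP -> /eqP; rewrite subr_eq0 => /eqP ->.
Qed.
End Aux.

Theorem lemma4p6 (q : nat) (F : finFieldType) (L : fieldExtType F)
    (T : {mpoly F[3]}) (beta : L) :
  #|F| = q ->
  \dim {:L} = 2%N ->
  basis_of fullv [:: 1; beta] ->
  reduced_mpoly q T ->
  property_e T ->
  forall (a b : F) (S : {poly L}),
    a != b -> is_Sab beta T a b S -> perm_poly S.
Proof.
move=> _ _ hB _ he a b S ab [hS _].
have inj : injective (fun x : L => S.[x]).
  move=> x1 x2 /=.
  have [y1 [z1 ->]] := @decomp _ _ _ hB x1.
  have [y2 [z2 ->]] := @decomp _ _ _ hB x2.
  rewrite !hS !mulr_algl => /(@uniq_coords _ _ _ hB) [e1 e2].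
  have [[y z] [_ U]] := he a (ev3 T a y1 z1) b (ev3 T b y1 z1) ab.
  have := U (y1, z1) (conj erefl erefl).
  have := U (y2, z2) (conj (esym e1) (esym e2)).
  by move=> -> [-> ->].
have surj : forall w : L, exists x : L, S.[x] = w.
  move=> w; have [B [D ->]] := @decomp _ _ _ hB w.
  have [[y z] [[h1 h2] _]] := he a B b D ab.
  exists (y%:A + z *: beta).
  by rewrite hS mulr_algl /= h1 h2.
have surj' : forall w : L, exists x : L, S.[x] == w.
  by move=> w; have [x hx] := surj w; exists x; apply/eqP.
exists (fun w => xchoose (surj' w)).
  by move=> x; apply: inj; rewrite /= (eqP (xchooseP (surj' S.[x]))).
by move=> w; rewrite /= (eqP (xchooseP (surj' w))).
Qed.
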